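(* Let $q$ be a prime number and $l$ a positive integer. Then $\dfrac{1}{q^{s-1}}\in\mathbb{Q}\text{-}\mathcal{KS}(q^{l})$ for every positive integer $s$ dividing $l-1$.
   Context: Every nonzero rational $\alpha$ is written $\alpha=\alpha_1/\alpha_2$ with $\alpha_1\in\mathbb{Z}$, $\alpha_2$ a positive integer and $\gcd(\alpha_1,\alpha_2)=1$. For an integer $N\ge 2$ and a nonzero rational $\alpha=\alpha_1/\alpha_2$, $N$ is called an $\alpha$-Korselt number if $N\neq\alpha$ and $\alpha_2p-\alpha_1$ divides $\alpha_2N-\alpha_1$ (in $\mathbb{Z}$) for every prime divisor $p$ of $N$. $\mathbb{Q}\text{-}\mathcal{KS}(N)$ is the set of all $\beta\in\mathbb{Q}\setminus\{0,N\}$ such that $N$ is a $\beta$-Korselt number. *)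

(* Defs.v *)
From mathcomp Require Import all_boot all_order all_algebra.
Set Implicit Arguments. Unset Strict Implicit. Unset Printing Implicit Defensive.
Import Order.TTheory GRing.Theory Num.Theory.
Local Open Scope ring_scope.

(* A nonzero rational alpha is written alpha1/alpha2 with alpha1 = numq alpha,
   alpha2 = denq alpha > 0, gcd = 1 (the normal form of rat). *)

Definition is_Korselt (N : nat) (alpha : rat) : Prop :=
  (2 <= N)%N /\ alpha != 0 /\ alpha != (N%:R : rat) /\
  forall p : nat, prime p -> (p %| N)%N ->
    ((denq alpha * p%:Z - numq alpha) %| (denq alpha * N%:Z - numq alpha))%Z.

Definition QKS (N : nat) (beta : rat) : Prop :=
  beta != 0 /\ beta != (N%:R : rat) /\ is_Korselt N beta.

(* Main.v *)
Require Import Defs.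
From mathcomp Require Import all_boot all_order all_algebra.
From mathcomp Require Import zify.
Import Order.TTheory GRing.Theory Num.Theory.
Local Open Scope ring_scope.

Theorem proposition5p1 (q l : nat) :
  prime q -> (0 < l)%N ->
  forall s : nat, (0 < s)%N -> (s %| l.-1)%N ->
    QKS (q ^ l)%N ((q%:R : rat) ^+ s.-1)^-1.
Proof.
move=> pq l0 s s0 /dvdnP [t ht].
have q1 : (1 < q)%N by apply: prime_gt1.
set k := (q ^ s.-1)%N.
have k0 : (0 < k)%N by rewrite expn_gt0 ltnW.
have E : ((q%:R : rat) ^+ s.-1)^-1 = ((Posz k)%:~R)^-1.
  by rewrite -natrX.
have hnum : numq (((Posz k)%:~R : rat)^-1) = 1.
  rewrite -div1r -[1]/(1%:~R) coprimeq_num /=; last by rewrite coprime1n.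
  by rewrite mulr1 gtr0_sg // ltz_nat.
have hden : denq (((Posz k)%:~R : rat)^-1) = Posz k.
  by rewrite denqVz // -lt0n.
have ql2 : (2 <= q ^ l)%N.
  by apply: (leq_trans q1); rewrite -{1}(expn1 q); apply: leq_pexp2l (ltnW q1) l0.
have ne0 : ((Posz k)%:~R : rat)^-1 != 0.
  by rewrite invr_eq0 intr_eq0 -lt0n.
have neN : ((Posz k)%:~R : rat)^-1 != ((q ^ l)%N%:R : rat).
  apply/eqP => /(congr1 numq); rewrite hnum pmulrn numq_int => -[] h1.
  by move: ql2; rewrite -h1.
rewrite E; split => //; split => //; split => //; split => //; split => //.
move=> p pp; rewrite Euclid_dvdX // (dvdn_prime2 pp pq) => /andP [/eqP -> _].
rewrite hnum hden.
have A : Posz k * Posz q - 1 = Posz (q ^ s).-1.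
  by rewrite -PoszM /k -expnSr prednK // predn_int // expn_gt0 (ltnW q1).
have B : Posz k * Posz (q ^ l)%N - 1 = Posz ((q ^ s) ^ t.+1).-1.
  rewrite -PoszM /k -expnD -expnM predn_int; last by rewrite expn_gt0 (ltnW q1).
  congr (Posz _ - 1); congr (_ ^ _)%N; lia.
rewrite A B /dvdz /=; exact: dvdn_pred_predX.
Qed.
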